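(* Let $\mathcal S\subseteq\mathsf P^n$ be the stabilizer group of a stabilizer code, let $g_1,\dots,g_m\in\mathcal S$, and in $\mathsf P_{DS}=\mathsf P^n\times\mathbb F_2^m$ let $f_i=(g_i,\hat i)$ ($\hat i$ the $i$-th standard basis vector), $\mathcal M=\langle f_1,\dots,f_m\rangle$, $\mathcal U=\mathcal M^\perp$. View $\mathcal S$ as $\{(s,0):s\in\mathcal S\}\subseteq\mathsf P_{DS}$, let $\mathcal L=\mathcal S^\perp$ (in $\mathsf P_{DS}$), and let the distance $d$ be the minimal weight (number of nonidentity coordinates among the $n+m$) of an element of $\mathcal U\setminus\mathcal S$. Let $\Gamma\subseteq 2^{[n+m]}$ with $|\gamma|\le\lfloor\frac{d-1}2\rfloor$ for all $\gamma$, and $P=\mathop{\ast}_{\gamma\in\Gamma}P_\gamma$ a distribution of errors $(e_d,e_m)\in\mathsf P_{DS}$ with each $P_\gamma$ supported on elements with support in $\gamma$ and $P_\gamma(I)>\frac12$. Let $P_m$ be the distribution on $\mathsf P_{DS}$ of $(I,e_m)$ where $(e_d,e_m)\sim P$, and $\tilde P=P\ast P_m$ (the distribution effectively observed when comparing syndromes of consecutive rounds). Then the logical channel $P_L(e)=\frac1{|\mathcal S|}\sum_{s\in\mathcal S}P(e\,(s,0))$ is uniquely determined by the syndrome statistics $\tilde E(s)=\sum_{e\in\mathsf P_{DS}}\langle s,e\rangle\tilde P(e)$, $s\in\mathcal M$ (among all such channels with the same $\Gamma$).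
   Context: $\mathsf P^n$ is the $n$-qubit Pauli group modulo phases. Bicharacter on $\mathsf P_{DS}$: $\langle(a,x),(b,y)\rangle=\langle a,b\rangle(-1)^{\sum_i x_iy_i}$, where $\langle a,b\rangle=+1$ if the Paulis $a,b$ commute and $-1$ otherwise; $B^\perp=\{c:\langle c,b\rangle=1\ \forall b\in B\}$. The support of $(e_d,e_m)$ is the set of qubit positions where $e_d$ is nonidentity together with positions $n+i$ where $e_m[i]=1$. Convolution: $(f\ast g)(a)=\sum_b f(b)g(ab)$. Phenomenological model: in each round a new error $(e_d,e_m)\sim P$ occurs, $e_d$ a data error and $e_m$ flips of the outcomes of the measurements of $g_1,\dots,g_m$. *)

(* Defs.v *)
From HB Require Import structures.
From mathcomp Require Import all_boot all_order all_algebra.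
From mathcomp Require Import reals.
Set Implicit Arguments. Unset Strict Implicit. Unset Printing Implicit Defensive.
Import Order.TTheory GRing.Theory Num.Theory.
Local Open Scope ring_scope.

(* Single-qubit Pauli modulo phases, encoded as (x,z) bits:
   I = (0,0), X = (1,0), Y = (1,1), Z = (0,1). *)
Definition Pn (n : nat) := {ffun 'I_n -> bool * bool}.
Definition PDS (n m : nat) := (Pn n * {ffun 'I_m -> bool})%type.

Definition pauli_id (n : nat) : Pn n := [ffun => (false, false)].
Definition pmul (n : nat) (a b : Pn n) : Pn n :=
  [ffun i => (xorb (a i).1 (b i).1, xorb (a i).2 (b i).2)].

Definition ds_id (n m : nat) : PDS n m := (pauli_id n, [ffun => false]).
Definition ds_mul (n m : nat) (u v : PDS n m) : PDS n m :=
  (pmul u.1 v.1, [ffun j => xorb (u.2 j) (v.2 j)]).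

Definition anticomm (n : nat) (a b : Pn n) : bool :=
  odd (\sum_(i < n) (((a i).1 && (b i).2) (+) ((a i).2 && (b i).1)) : nat).
Definition comm_sign (R : realType) (n : nat) (a b : Pn n) : R :=
  (-1) ^+ anticomm a b.

Definition bicharb (n m : nat) (u v : PDS n m) : bool :=
  xorb (anticomm u.1 v.1) (odd (\sum_(j < m) (u.2 j && v.2 j) : nat)).
Definition bichar (R : realType) (n m : nat) (u v : PDS n m) : R :=
  (-1) ^+ bicharb u v.

Definition perp (n m : nat) (B : {set PDS n m}) : {set PDS n m} :=
  [set c | [forall b in B, ~~ bicharb c b]].

Definition is_subgroup_ds (n m : nat) (H : {set PDS n m}) : bool :=
  (ds_id n m \in H) && [forall a in H, forall b in H, ds_mul a b \in H].
Definition gen_ds (n m : nat) (A : {set PDS n m}) : {set PDS n m} :=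
  [set x | [forall H : {set PDS n m},
              (is_subgroup_ds H && (A \subset H)) ==> (x \in H)]].

Definition stabilizer_group (n : nat) (S : {set Pn n}) : Prop :=
  [/\ pauli_id n \in S,
      (forall a b, a \in S -> b \in S -> pmul a b \in S) &
      (forall a b, a \in S -> b \in S -> anticomm a b = false)].

Definition fgen (n m : nat) (g : 'I_m -> Pn n) (i : 'I_m) : PDS n m :=
  (g i, [ffun j => j == i]).
Definition Mgrp (n m : nat) (g : 'I_m -> Pn n) : {set PDS n m} :=
  gen_ds [set fgen g i | i : 'I_m].
Definition Ugrp (n m : nat) (g : 'I_m -> Pn n) : {set PDS n m} :=
  perp (Mgrp g).

Definition emb (n m : nat) (s : Pn n) : PDS n m := (s, [ffun => false]).
Definition Sds (n m : nat) (S : {set Pn n}) : {set PDS n m} := [set emb m s | s in S].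

(* support in [n+m]: positions i < n where e_d is non-identity, and n+j where e_m[j]=1 *)
Definition supp (n m : nat) (e : PDS n m) : {set 'I_(n + m)} :=
  [set k | match split k with
           | inl i => e.1 i != (false, false)
           | inr j => e.2 j
           end].
Definition weight (n m : nat) (e : PDS n m) : nat := #|supp e|.

Definition is_distance (n m : nat) (S : {set Pn n}) (g : 'I_m -> Pn n) (d : nat) : Prop :=
  (exists2 e, e \in Ugrp g :\: Sds m S & weight e = d) /\
  (forall e, e \in Ugrp g :\: Sds m S -> (d <= weight e)%N).

Definition is_distr (R : realType) (n m : nat) (P : PDS n m -> R) : Prop :=
  (forall e, 0 <= P e) /\ \sum_e P e = 1.

Definition conv (R : realType) (n m : nat) (f g : PDS n m -> R) : PDS n m -> R :=
  fun a => \sum_b f b * g (ds_mul a b).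
Definition delta_id (R : realType) (n m : nat) : PDS n m -> R :=
  fun e => if e == ds_id n m then 1 else 0.
Definition conv_fam (R : realType) (n m : nat) (Gamma : {set {set 'I_(n + m)}})
  (Pg : {set 'I_(n + m)} -> PDS n m -> R) : PDS n m -> R :=
  \big[(fun f h => @conv R n m f h) / @delta_id R n m]_(gm in Gamma) Pg gm.

Definition good_factor (R : realType) (n m : nat) (gm : {set 'I_(n + m)})
  (Q : PDS n m -> R) : Prop :=
  [/\ is_distr Q, (forall e, Q e != 0 -> supp e \subset gm) & Q (ds_id n m) > 1 / 2].

Definition meas_part (n m : nat) (e : PDS n m) : PDS n m := (pauli_id n, e.2).
Definition Pmeas (R : realType) (n m : nat) (P : PDS n m -> R) : PDS n m -> R :=
  fun a => \sum_(e | meas_part e == a) P e.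
Definition Ptilde (R : realType) (n m : nat) (P : PDS n m -> R) : PDS n m -> R :=
  conv P (Pmeas P).

Definition Etilde (R : realType) (n m : nat) (P : PDS n m -> R) (s : PDS n m) : R :=
  \sum_e bichar R s e * Ptilde P e.

Definition logical_channel (R : realType) (n m : nat) (S : {set Pn n})
  (P : PDS n m -> R) (e : PDS n m) : R :=
  (#|S|%:R)^-1 * \sum_(s in S) P (ds_mul e (emb m s)).

(* Main.v *)
Require Import Defs.
From HB Require Import structures.
From mathcomp Require Import all_boot all_order all_algebra.
From mathcomp Require Import reals ring lra zify.
From mathcomp Require Import exp.
Set Implicit Arguments. Unset Strict Implicit. Unset Printing Implicit Defensive.
Import Order.TTheory GRing.Theory Num.Theory.
Local Open Scope ring_scope.

Section G.
Variables (n m : nat).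
Local Notation G := (PDS n m).

Lemma xorbE (a b : bool) : xorb a b = a (+) b. Proof. by case: a; case: b. Qed.

Ltac dsext := rewrite /ds_mul /pmul /ds_id /pauli_id /=; congr pair; apply/ffunP => i; rewrite !ffunE /= ?xorbE.

Lemma ds_mulC (a b : G) : ds_mul a b = ds_mul b a.
Proof.
case: a b => [a1 a2] [b1 b2]; dsext.
  by case: (a1 i) (b1 i) => [x y] [u v]; rewrite /= ?xorbE (addbC x) (addbC y).
by rewrite addbC.
Qed.

Lemma ds_mulA (a b c : G) : ds_mul a (ds_mul b c) = ds_mul (ds_mul a b) c.
Proof. by case: a b c => [a1 a2] [b1 b2] [c1 c2]; dsext; rewrite ?ffunE /= ?addbA. Qed.

Lemma ds_mulK (a b : G) : ds_mul a (ds_mul a b) = b.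
Proof. by case: a b => [a1 a2] [b1 b2]; dsext; rewrite ?ffunE /= ?addKb //; case: (b1 i). Qed.

Lemma ds_mul1 (a : G) : ds_mul (ds_id n m) a = a.
Proof. by case: a => [a1 a2]; dsext; rewrite ?ffunE //=; case: (a1 i). Qed.

Lemma ds_mulvv (a : G) : ds_mul a a = ds_id n m.
Proof. by case: a => [a1 a2]; dsext; rewrite ?addbb. Qed.

Lemma ds_mul_cancel (a b c : G) : ds_mul (ds_mul a b) (ds_mul c b) = ds_mul a c.
Proof.
case: a b c => [a1 a2] [b1 b2] [c1 c2]; dsext; rewrite ?ffunE /=.
  by case: (a1 i) (b1 i) (c1 i) => [x1 x2] [y1 y2] [z1 z2] /=; rewrite ?xorbE; case: x1 x2 y1 y2 z1 z2 => [] [] [] [] [] [].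
by rewrite ?xorbE; case: (a2 i) (b2 i) (c2 i) => [] [] [].
Qed.

Lemma ds_mul_inj (a : G) : injective (ds_mul a).
Proof. exact: can_inj (ds_mulK a). Qed.

Lemma odd_sumb (I : finType) (P : pred I) (F : I -> bool) :
  odd (\sum_(i | P i) (F i : nat)) = \big[addb/false]_(i | P i) F i.
Proof.
rewrite (big_morph odd oddD (erefl (odd 0))).
by apply: eq_bigr => i _; rewrite oddb.
Qed.

Definition aterm (x y : bool * bool) : bool := (x.1 && y.2) (+) (x.2 && y.1).

Lemma anticommE (a b : Pn n) : anticomm a b = \big[addb/false]_(i < n) aterm (a i) (b i).
Proof. by rewrite /anticomm odd_sumb. Qed.

Lemma anticommC (a b : Pn n) : anticomm a b = anticomm b a.
Proof. rewrite !anticommE; apply: eq_bigr => i _; rewrite /aterm addbC; congr (_ (+) _); apply andbC. Qed.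

Lemma anticommMl (a b c : Pn n) : anticomm (pmul a b) c = anticomm a c (+) anticomm b c.
Proof.
rewrite !anticommE -big_split /=; apply: eq_bigr => i _; rewrite /pmul ffunE /aterm /=.
by case: (a i) (b i) (c i) => [x1 x2] [y1 y2] [z1 z2] /=; case: x1 x2 y1 y2 z1 z2 => [] [] [] [] [] [].
Qed.

Lemma anticomm1 (a : Pn n) : anticomm a (pauli_id n) = false.
Proof. by rewrite anticommE big1 // => i _; rewrite ffunE /aterm /= !andbF. Qed.

Lemma bicharbC (a b : G) : bicharb a b = bicharb b a.
Proof.
rewrite /bicharb !xorbE anticommC; congr (_ (+) _); congr odd; apply: eq_bigr => j _; by rewrite andbC.
Qed.

Lemma bicharbMl (a b c : G) : bicharb (ds_mul a b) c = bicharb a c (+) bicharb b c.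
Proof.
rewrite /bicharb !xorbE anticommMl !odd_sumb.
have -> : \big[addb/false]_(j < m) ((ds_mul a b).2 j && c.2 j) =
   \big[addb/false]_(j < m) (a.2 j && c.2 j) (+) \big[addb/false]_(j < m) (b.2 j && c.2 j).
  rewrite -big_split; apply: eq_bigr => j _; rewrite /ds_mul ffunE /=.
  by case: (a.2 j) (b.2 j) (c.2 j) => [] [] [].
rewrite /ds_mul /=.
by case: (anticomm a.1 c.1) (anticomm b.1 c.1) (\big[addb/false]_(j < m) (a.2 j && c.2 j)) (\big[addb/false]_(j < m) (b.2 j && c.2 j)) => [] [] [] [].
Qed.

Lemma bicharbMr (a b c : G) : bicharb c (ds_mul a b) = bicharb c a (+) bicharb c b.
Proof. by rewrite bicharbC bicharbMl !(bicharbC c). Qed.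

Lemma bicharb1 (a : G) : bicharb a (ds_id n m) = false.
Proof. by rewrite /bicharb xorbE anticomm1 odd_sumb big1 // => j _; rewrite ffunE andbF. Qed.

Lemma splitl (i : 'I_n) : split (lshift m i) = inl i.
Proof. exact: (unsplitK (inl i : 'I_n + 'I_m)). Qed.
Lemma splitr (j : 'I_m) : split (rshift n j) = inr j.
Proof. exact: (unsplitK (inr j : 'I_n + 'I_m)). Qed.

Lemma supp_l (e : G) i : (lshift m i \in supp e) = (e.1 i != (false,false)).
Proof. by rewrite inE splitl. Qed.
Lemma supp_r (e : G) j : (rshift n j \in supp e) = e.2 j.
Proof. by rewrite inE splitr. Qed.

Lemma disjoint_bichar (a b : G) : [disjoint supp a & supp b] -> bicharb a b = false.
Proof.
move=> D; have dis : forall x, x \in supp a -> x \in supp b -> False.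
  by move=> x xa xb; move: (disjointFr D xa); rewrite xb.
rewrite /bicharb xorbE anticommE odd_sumb.
rewrite big1 ?big1 // => [j _|i _].
  by apply/negP => /andP[h1 h2]; apply: (dis (rshift n j)); rewrite supp_r.
case E1: (a.1 i == (false,false)); first by rewrite (eqP E1) /aterm.
case E2: (b.1 i == (false,false)); first by rewrite (eqP E2) /aterm /= !andbF.
by exfalso; apply: (dis (lshift m i)); rewrite supp_l ?E1 ?E2.
Qed.

Lemma ord_split (k : 'I_(n + m)) : (exists i, k = lshift m i) \/ (exists j, k = rshift n j).
Proof. rewrite -[k]splitK; case: (split k) => [i|j]; [left|right]; by exists i || exists j. Qed.

Lemma exists_anti (z : G) k : k \in supp z ->
  exists w : G, supp w \subset [set k] /\ bicharb w z.
Proof.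
case: (ord_split k) => [[i ->]|[j ->]].
- rewrite supp_l => Hz.
  exists ([ffun i' => if i' == i then (if (z.1 i).1 then (false,true) else (true,false)) else (false,false)], [ffun => false]); split.
    apply/subsetP => k'; case: (ord_split k') => [[i' ->]|[j' ->]]; rewrite ?supp_l ?supp_r /= ffunE //.
    by case: (i' =P i) => [->|_]; rewrite ?inE ?eqxx //.
  rewrite /bicharb xorbE odd_sumb big1 ?addbF; last by move=> j _; rewrite ffunE.
  rewrite anticommE (bigD1 i) //= big1 ?addbF.
    rewrite ffunE eqxx /aterm; move: Hz; case: (z.1 i) => [[] []] //=.
  by move=> i' /negbTE ne; rewrite ffunE ne.
- rewrite supp_r => Hz.
  exists (pauli_id n, [ffun j' => j' == j]); split.
    apply/subsetP => k'; case: (ord_split k') => [[i' ->]|[j' ->]]; rewrite ?supp_l ?supp_r /= ffunE //.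
    by case: eqP => [->|]; rewrite ?eqxx ?inE //.
  rewrite /bicharb xorbE anticommC anticomm1 odd_sumb (bigD1 j) //= big1 ?ffunE ?eqxx ?addbF //.
  by move=> j' /negbTE ne; rewrite ffunE ne.
Qed.

Lemma supp_mul (a b : G) : supp (ds_mul a b) \subset supp a :|: supp b.
Proof.
apply/subsetP => k; case: (ord_split k) => [[i ->]|[j ->]]; rewrite in_setU ?supp_l ?supp_r /= !ffunE ?xorbE.
  by case: (a.1 i) (b.1 i) => [[] []] [[] []].
by case: (a.2 j) (b.2 j).
Qed.

Lemma weight0 (e : G) : weight e = 0%N -> e = ds_id n m.
Proof.
move=> /cards0_eq se; case: e se => [e1 e2] se; rewrite /ds_id /pauli_id; congr pair; apply/ffunP => i; rewrite ffunE.
  by apply/eqP; move: (in_set0 (lshift m i)); rewrite -se supp_l => /negbFE.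
by move: (in_set0 (rshift n i)); rewrite -se supp_r.
Qed.

Lemma supp_mp (w : G) : supp (meas_part w) \subset supp w.
Proof.
apply/subsetP => k; case: (ord_split k) => [[i ->]|[j ->]]; rewrite ?supp_l ?supp_r //= ffunE ?eqxx //.
Qed.

Lemma mpM (a b : G) : meas_part (ds_mul a b) = ds_mul (meas_part a) (meas_part b).
Proof. rewrite /meas_part /ds_mul /=; congr pair; apply/ffunP => i; by rewrite !ffunE. Qed.

Lemma mp_bichar (a b : G) : bicharb a (meas_part b) = bicharb (meas_part a) b.
Proof. by rewrite /bicharb /= anticomm1 anticommC anticomm1. Qed.

Lemma mpK (a : G) : meas_part (meas_part a) = meas_part a.
Proof. by []. Qed.
End G.

Section F.
Variables (R : realType) (n m : nat).
Local Notation G := (PDS n m).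

Definition hat (f : G -> R) (c : G) : R := \sum_e bichar R c e * f e.

Lemma bichar_sign (a b : G) : bichar R a b = (-1) ^+ bicharb a b. Proof. by []. Qed.

Lemma bicharMr (a b c : G) : bichar R a (ds_mul b c) = bichar R a b * bichar R a c.
Proof. by rewrite /bichar bicharbMr signr_addb. Qed.
Lemma bicharMl (a b c : G) : bichar R (ds_mul b c) a = bichar R b a * bichar R c a.
Proof. by rewrite /bichar bicharbMl signr_addb. Qed.
Lemma bicharC (a b : G) : bichar R a b = bichar R b a.
Proof. by rewrite /bichar bicharbC. Qed.
Lemma bichar1 (a : G) : bichar R a (ds_id n m) = 1.
Proof. by rewrite /bichar bicharb1. Qed.

Lemma subgroupM (H : {set G}) a b : is_subgroup_ds H -> a \in H -> b \in H -> ds_mul a b \in H.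
Proof. by case/andP => _ /forall_inP h aH bH; move/forall_inP: (h a aH) => /(_ b bH). Qed.

Lemma subgroup1 (H : {set G}) : is_subgroup_ds H -> ds_id n m \in H.
Proof. by case/andP. Qed.

Lemma char_sum (H : {set G}) z : is_subgroup_ds H ->
  \sum_(y in H) bichar R y z = if z \in perp H then #|H|%:R else 0.
Proof.
move=> sH; case: ifP => zp.
  rewrite -sumr_const; apply: eq_bigr => y yH.
  move: zp; rewrite inE => /forall_inP /(_ y yH) /negbTE.
  by rewrite /bichar bicharbC => ->.
move/negbT: zp; rewrite inE negb_forall => /existsP [b]; rewrite negb_imply negbK => /andP[bH bz].
set S := (X in X = _).
have : S = - S.
  rewrite {1}/S (reindex_inj (@ds_mul_inj n m b)) /=.
  rewrite (eq_bigl (fun y => y \in H)); last first.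
    move=> y /=; apply/idP/idP => [h|h]; last exact: subgroupM.
    by rewrite -(ds_mulK b y); apply: subgroupM.
  rewrite /S -sumrN; apply: eq_bigr => y _.
  by rewrite bicharMl /bichar bicharbC bz expr1 mulN1r.
move=> h; lra.
Qed.

Lemma subgroupT : is_subgroup_ds [set: G].
Proof. by rewrite /is_subgroup_ds inE /=; apply/forall_inP => a _; apply/forall_inP => b _; rewrite inE. Qed.

Lemma perpT z : (z \in perp [set: G]) = (z == ds_id n m).
Proof.
apply/idP/idP => [|/eqP ->]; last first.
  by rewrite inE; apply/forall_inP => b _; rewrite bicharbC bicharb1.
rewrite inE => /forall_inP h; apply/negPn/negP => nz.
have : weight z != 0%N.
  by apply/negP => /eqP /weight0 ze; rewrite ze eqxx in nz.
rewrite /weight -lt0n card_gt0 => /set0Pn [k kz].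
have [w [_ wz]] := exists_anti kz.
by move: (h w (in_setT w)); rewrite bicharbC wz.
Qed.

Lemma orth z : \sum_y bichar R y z = if z == ds_id n m then #|[set: G]|%:R else 0.
Proof.
transitivity (\sum_(y in [set: G]) bichar R y z); first by apply: eq_bigl => y; rewrite inE.
by rewrite char_sum ?subgroupT // perpT.
Qed.

Lemma fourier_inv (f : G -> R) x : \sum_c bichar R c x * hat f c = #|[set: G]|%:R * f x.
Proof.
rewrite /hat.
under eq_bigr => c _ do rewrite big_distrr /=.
rewrite exchange_big /=.
transitivity (\sum_e f e * \sum_y bichar R y (ds_mul x e)).
  apply: eq_bigr => e _; rewrite big_distrr /=; apply: eq_bigr => c _.
  by rewrite bicharMr mulrA mulrC.
rewrite (bigD1 x) //= [X in _ + X]big1 ?addr0.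
  by rewrite orth ds_mulvv eqxx mulrC.
move=> e ne; rewrite orth.
case: eqP => [h|]; last by rewrite mulr0.
by exfalso; move/eqP: ne; apply; rewrite -(ds_mulK x e) h ds_mulC ds_mul1.
Qed.

Lemma hat_conv (f g : G -> R) c : hat (conv f g) c = hat f c * hat g c.
Proof.
rewrite /hat /conv.
under eq_bigr => a _ do rewrite big_distrr /=.
rewrite exchange_big /= mulr_suml; apply: eq_bigr => b _.
rewrite (reindex_inj (@ds_mul_inj n m b)) /= mulr_sumr; apply: eq_bigr => a _.
rewrite bicharMr (ds_mulC b a) -ds_mulA ds_mulvv ds_mulC ds_mul1.
ring.
Qed.

Lemma hat_delta c : hat (@delta_id R n m) c = 1.
Proof.
rewrite /hat (bigD1 (ds_id n m)) //= big1 ?addr0 /delta_id ?eqxx ?bichar1 ?mulr1 //.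
by move=> e /negbTE ->; rewrite mulr0.
Qed.

Lemma hat_conv_fam Gamma (Pg : {set 'I_(n + m)} -> G -> R) c :
  hat (conv_fam Gamma Pg) c = \prod_(gm in Gamma) hat (Pg gm) c.
Proof.
rewrite /conv_fam.
apply: (big_morph (fun f => hat f c) (fun f g => hat_conv f g c) (hat_delta c)).
Qed.

Lemma hat_Pmeas (P : G -> R) c : hat (Pmeas P) c = hat P (meas_part c).
Proof.
rewrite /hat /Pmeas.
under eq_bigr => a _ do rewrite big_mkcond big_distrr /=.
rewrite exchange_big /=; apply: eq_bigr => e _.
rewrite (bigD1 (meas_part e)) //= eqxx big1 ?addr0.
  by rewrite /bichar mp_bichar.
by move=> a /negbTE; rewrite eq_sym => ->; rewrite mulr0.
Qed.

Lemma Etilde_hat (P : G -> R) s : Etilde P s = hat P s * hat P (meas_part s).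
Proof. by rewrite /Etilde /Ptilde -/(hat _ _) hat_conv hat_Pmeas. Qed.

Lemma hat_pos gm (Q : G -> R) c : good_factor gm Q -> 0 < hat Q c.
Proof.
case=> [[Q0 Q1] _ Qid].
rewrite /hat (bigD1 (ds_id n m)) //= bichar1 mul1r.
move: Q1; rewrite (bigD1 (ds_id n m)) //= => Q1.
have : - \sum_(e | e != ds_id n m) Q e <= \sum_(e | e != ds_id n m) bichar R c e * Q e.
  rewrite -sumrN; apply: ler_sum => e _; rewrite /bichar.
  have := Q0 e; case: (bicharb c e); rewrite ?expr1 ?expr0 ?mulN1r ?mul1r => h; lra.
move: Qid; rewrite ltr_pdivrMr // => Qid.
lra.
Qed.

Lemma hat_inv gm (Q : G -> R) c w : good_factor gm Q -> [disjoint supp w & gm] ->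
  hat Q (ds_mul c w) = hat Q c.
Proof.
case=> [_ Qs _] dw; rewrite /hat; apply: eq_bigr => e _.
case: (eqVneq (Q e) 0) => [->|nz]; first by rewrite !mulr0.
rewrite bicharMl {2}/bichar (@disjoint_bichar n m w e) ?expr0 ?mulr1 //.
by apply: disjointWr (Qs e nz) dw.
Qed.
End F.

Section K.
Variables (R : realType) (n m : nat).
Local Notation G := (PDS n m).

Lemma gen_sub (A : {set G}) : is_subgroup_ds (gen_ds A).
Proof.
apply/andP; split.
  by rewrite inE; apply/forallP => H; apply/implyP => /andP[/andP[h _] _].
apply/forall_inP => a; rewrite inE => /forallP ha; apply/forall_inP => b; rewrite inE => /forallP hb.
rewrite inE; apply/forallP => H; apply/implyP => hH.
move: (ha H) (hb H); rewrite hH /= => aH bH.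
by case/andP: hH => sH _; apply: subgroupM.
Qed.

Lemma perp_sub (H : {set G}) : is_subgroup_ds (perp H).
Proof.
apply/andP; split.
  by rewrite inE; apply/forall_inP => b _; rewrite bicharbC bicharb1.
apply/forall_inP => a; rewrite inE => /forall_inP ha; apply/forall_inP => b; rewrite inE => /forall_inP hb.
rewrite inE; apply/forall_inP => x xH; rewrite bicharbMl.
by rewrite (negbTE (ha x xH)) (negbTE (hb x xH)).
Qed.

Lemma Sds_id (S : {set Pn n}) : stabilizer_group S -> ds_id n m \in Sds m S.
Proof. by case=> S1 _ _; apply/imsetP; exists (pauli_id n). Qed.

Lemma close (S : {set Pn n}) (g : 'I_m -> Pn n) d (Gamma : {set {set 'I_(n + m)}}) y y1 c :
  stabilizer_group S -> is_distance S g d ->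
  (forall gm, gm \in Gamma -> (#|gm| <= (d.-1)./2)%N) ->
  [exists gm in Gamma, supp y \subset gm] -> [exists gm in Gamma, supp y1 \subset gm] ->
  ds_mul y y1 \in Ugrp g -> c \in perp (Sds m S) -> bicharb c y = bicharb c y1.
Proof.
move=> sS [_ dmin] hG /exists_inP [gm gmG sy] /exists_inP [gm' gmG' sy1] yU cL.
set u := ds_mul y y1 in yU.
have wu : (weight u <= d.-1)%N.
  have h1 : (weight u <= #|gm :|: gm'|)%N.
    apply: subset_leq_card; apply: subset_trans (supp_mul y y1) _.
    by apply: setUSS.
  have h2 : (#|gm :|: gm'| <= #|gm| + #|gm'|)%N by case: (leq_card_setU gm gm').
  have h3 := hG _ gmG; have h4 := hG _ gmG'.
  move: h1 h2 h3 h4; rewrite -!divn2 -!subn1 => h1 h2 h3 h4; lia.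
have uS : u \in Sds m S.
  apply/negPn/negP => nuS.
  have := dmin u; rewrite in_setD nuS yU => /(_ isT) dw.
  have w0 : weight u = 0%N by lia.
  by move: nuS; rewrite (weight0 w0) Sds_id.
move: cL; rewrite inE => /forall_inP /(_ u uS).
rewrite /u bicharbMr; by case: (bicharb c y) (bicharb c y1) => [] [].
Qed.

Lemma key (S : {set Pn n}) (g : 'I_m -> Pn n) d (Gamma : {set {set 'I_(n + m)}})
  (phi : {set 'I_(n + m)} -> G -> R) (D : G -> R) :
  stabilizer_group S -> is_distance S g d ->
  (forall gm, gm \in Gamma -> (#|gm| <= (d.-1)./2)%N) ->
  (forall gm c w, gm \in Gamma -> [disjoint supp w & gm] -> phi gm (ds_mul c w) = phi gm c) ->
  (forall c, D c = \sum_(gm in Gamma) phi gm c) ->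
  (forall s, s \in Mgrp g -> D s = 0) ->
  forall c, c \in perp (Sds m S) -> D c = 0.
Proof.
move=> sS dist hG inv Dsum DM c cL.
pose T y := [exists gm in Gamma, supp y \subset gm].
have ha : forall y, ~~ T y -> hat D y = 0.
  move=> y nTy.
  rewrite /hat; under eq_bigr => x _ do rewrite Dsum big_distrr /=.
  rewrite exchange_big /= big1 // => gm gmG.
  have : ~~ (supp y \subset gm).
    by apply: contra nTy => h; apply/exists_inP; exists gm.
  case/subsetPn => k ky kg.
  have [w [sw wy]] := exists_anti ky.
  have dw : [disjoint supp w & gm].
    by apply: disjointWl sw _; rewrite disjoints1.
  set X := (X in X = _).
  have : X = - X.
    rewrite {1}/X (reindex_inj (@ds_mul_inj n m w)) /= /X -sumrN; apply: eq_bigr => x _.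
    rewrite ds_mulC inv // bicharMr {2}/bichar bicharbC wy expr1.
    by rewrite mulrN1 mulNr.
  move=> h; lra.
have hb : forall y0, \sum_(y | ds_mul y y0 \in Ugrp g) hat D y = 0.
  move=> y0.
  have Mpos : (0 < #|Mgrp g|)%N by apply/card_gt0P; exists (ds_id n m); apply: subgroup1; apply: gen_sub.
  have : (#|Mgrp g|%:R : R) * \sum_(y | ds_mul y y0 \in Ugrp g) hat D y = 0.
    rewrite big_mkcond mulr_sumr /=.
    transitivity (\sum_y (\sum_(s in Mgrp g) bichar R s (ds_mul y y0)) * hat D y).
      apply: eq_bigr => y _; rewrite char_sum ?gen_sub //.
      by rewrite /Ugrp; case: (ds_mul y y0 \in perp (Mgrp g)); rewrite ?mulr0 ?mul0r.
    under eq_bigr => y _ do rewrite mulr_suml.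
    rewrite exchange_big /= big1 // => s sM.
    transitivity (bichar R s y0 * \sum_y bichar R y s * hat D y).
      rewrite mulr_sumr; apply: eq_bigr => y _.
      by rewrite bicharMr (@bicharC R n m y s); ring.
    by rewrite fourier_inv DM // !mulr0.
  move/eqP; rewrite mulf_eq0 => /orP[|/eqP //].
  by rewrite pnatr_eq0 => /eqP h; rewrite h in Mpos.
have Usub := @perp_sub (Mgrp g).
have hc : forall y0, \sum_(y | ds_mul y y0 \in Ugrp g) bichar R c y * hat D y = 0.
  move=> y0.
  case: (boolP [exists y1, T y1 && (ds_mul y1 y0 \in Ugrp g)]).
    case/existsP => y1 /andP[Ty1 y10].
    have eqP1 : forall y, (ds_mul y y0 \in Ugrp g) = (ds_mul y y1 \in Ugrp g).
      move=> y; apply/idP/idP => h.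
        by have := subgroupM Usub h y10; rewrite ds_mul_cancel.
      rewrite ds_mulC in y10.
      by have := subgroupM Usub h y10; rewrite ds_mul_cancel.
    transitivity (\sum_(y | ds_mul y y0 \in Ugrp g) bichar R c y1 * hat D y).
      apply: eq_bigr => y hy.
      case: (boolP (T y)) => Ty; last by rewrite ha // !mulr0.
      rewrite eqP1 in hy.
      by rewrite /bichar (close sS dist hG Ty Ty1 hy cL).
    by rewrite -mulr_sumr hb mulr0.
  rewrite negb_exists => /forallP nT.
  rewrite big1 // => y hy; rewrite ha ?mulr0 //.
  by apply: contraT; rewrite negbK => Ty; move: (nT y); rewrite Ty hy.
have Upos : (0 < #|Ugrp g|)%N by apply/card_gt0P; exists (ds_id n m); apply: subgroup1.
have : (#|Ugrp g|%:R : R) * \sum_y bichar R c y * hat D y = 0.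
  rewrite mulrC mulr_suml.
  transitivity (\sum_y0 \sum_(y | ds_mul y y0 \in Ugrp g) bichar R c y * hat D y); last first.
    by rewrite big1 // => y0 _; apply: hc.
  under [RHS]eq_bigr => y0 _ do rewrite big_mkcond /=.
  rewrite [RHS]exchange_big /=; apply: eq_bigr => y _.
  rewrite -big_mkcond /=.
  rewrite (eq_bigr (fun _ => bichar R c y * hat D y * 1)); last by move=> *; rewrite mulr1.
  rewrite -mulr_sumr; congr (_ * _).
  rewrite -sumr_const (reindex_inj (@ds_mul_inj n m y)) /=.
  by apply: eq_bigl => y0 /=.
move/eqP; rewrite mulf_eq0 => /orP[|/eqP h].
  by rewrite pnatr_eq0 => /eqP h; rewrite h in Upos.
have := fourier_inv D c.
under eq_bigr => y _ do rewrite bicharC.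
rewrite h => /esym /eqP; rewrite mulf_eq0 pnatr_eq0 => /orP[/eqP hG0|/eqP //].
by move: (card0_eq hG0 c); rewrite inE.
Qed.
End K.

Lemma ln_prod (R : realType) (I : finType) (A : {pred I}) (F : I -> R) :
  (forall i, i \in A -> 0 < F i) -> ln (\prod_(i in A) F i) = \sum_(i in A) ln (F i).
Proof.
move=> Fpos.
suff [] : 0 < \prod_(i in A) F i /\ \sum_(i in A) ln (F i) = ln (\prod_(i in A) F i) by [].
apply: (big_rec2 (fun a b => 0 < b /\ a = ln b)); first by rewrite ln1.
move=> i a b iA [bpos ->]; split; first by rewrite mulr_gt0 ?Fpos.
by rewrite lnM // posrE ?Fpos.
Qed.

Lemma Sds_sub (n m : nat) (S : {set Pn n}) : stabilizer_group S -> is_subgroup_ds (Sds m S).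
Proof.
move=> sS; apply/andP; split; first exact: Sds_id.
case: sS => _ SM _.
apply/forall_inP => a /imsetP [s1 s1S ->]; apply/forall_inP => b /imsetP [s2 s2S ->].
apply/imsetP; exists (pmul s1 s2); first exact: SM.
by rewrite /ds_mul /emb /=; congr pair; apply/ffunP => j; rewrite !ffunE.
Qed.

Lemma emb_inj (n m : nat) : injective (@emb n m).
Proof. by move=> a b []. Qed.

Unset Implicit Arguments.

Theorem corollary2 (R : realType) (n m : nat) (S : {set Pn n})
  (g : 'I_m -> Pn n) (d : nat) (Gamma : {set {set 'I_(n + m)}})
  (Pg Qg : {set 'I_(n + m)} -> PDS n m -> R) :
  stabilizer_group S ->
  (forall i, g i \in S) ->
  is_distance S g d ->
  (forall gm, gm \in Gamma -> (#|gm| <= (d.-1)./2)%N) ->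
  (forall gm, gm \in Gamma -> good_factor gm (Pg gm)) ->
  (forall gm, gm \in Gamma -> good_factor gm (Qg gm)) ->
  (forall s, s \in Mgrp g ->
     Etilde (conv_fam Gamma Pg) s = Etilde (conv_fam Gamma Qg) s) ->
  forall e, logical_channel S (conv_fam Gamma Pg) e
            = logical_channel S (conv_fam Gamma Qg) e.
Proof.
move=> sS gS dist hG gP gQ hE.
set P := conv_fam Gamma Pg; set Q := conv_fam Gamma Qg.
have posP : forall c, 0 < hat P c.
  by move=> c; rewrite /P hat_conv_fam; apply: prodr_gt0 => gm gmG; apply: (hat_pos _ (gP _ gmG)).
have posQ : forall c, 0 < hat Q c.
  by move=> c; rewrite /Q hat_conv_fam; apply: prodr_gt0 => gm gmG; apply: (hat_pos _ (gQ _ gmG)).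
pose FP c := ln (hat P c); pose FQ c := ln (hat Q c).
have FPE : forall c, FP c = \sum_(gm in Gamma) ln (hat (Pg gm) c).
  by move=> c; rewrite /FP /P hat_conv_fam ln_prod // => gm gmG; apply: (hat_pos _ (gP _ gmG)).
have FQE : forall c, FQ c = \sum_(gm in Gamma) ln (hat (Qg gm) c).
  by move=> c; rewrite /FQ /Q hat_conv_fam ln_prod // => gm gmG; apply: (hat_pos _ (gQ _ gmG)).
have EP : forall c, ln (Etilde P c) = FP c + FP (meas_part c).
  by move=> c; rewrite Etilde_hat lnM // posrE.
have EQ : forall c, ln (Etilde Q c) = FQ c + FQ (meas_part c).
  by move=> c; rewrite Etilde_hat lnM // posrE.
pose phi gm c := (ln (hat (Pg gm) c) + ln (hat (Pg gm) (meas_part c)))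
               - (ln (hat (Qg gm) c) + ln (hat (Qg gm) (meas_part c))).
have Dk := @key R n m S g d Gamma phi (fun c => ln (Etilde P c) - ln (Etilde Q c)) sS dist hG.
have HL : forall c, c \in perp (Sds m S) -> ln (Etilde P c) - ln (Etilde Q c) = 0.
  apply: Dk.
  - move=> gm c w gmG dw; rewrite /phi mpM.
    have dw' : [disjoint supp (meas_part w) & gm] by apply: disjointWl (supp_mp w) dw.
    by rewrite !(hat_inv _ (gP _ gmG) dw) !(hat_inv _ (gP _ gmG) dw') !(hat_inv _ (gQ _ gmG) dw) !(hat_inv _ (gQ _ gmG) dw').
  - move=> c; rewrite EP EQ !FPE !FQE -!big_split -sumrB /=.
    by apply: eq_bigr => gm _; rewrite /phi.
  - by move=> s sM; rewrite hE // subrr.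
have hatL : forall c, c \in perp (Sds m S) -> hat P c = hat Q c.
  move=> c cL.
  have mL : meas_part c \in perp (Sds m S).
    rewrite inE; apply/forall_inP => x /imsetP [s sS' ->].
    by rewrite -mp_bichar /emb /meas_part /= -/(ds_id n m) bicharb1.
  have h1 := HL c cL; have h2 := HL _ mL.
  rewrite !EP !EQ /= in h1 h2.
  have e1 : FP c = FQ c by lra.
  by apply: ln_inj; rewrite ?posrE.
have Gpos : (#|[set: PDS n m]|%:R : R) != 0.
  by rewrite pnatr_eq0 -lt0n; apply/card_gt0P; exists (ds_id n m); rewrite inE.
have inv : forall (F : PDS n m -> R) x, F x = (#|[set: PDS n m]|%:R)^-1 * \sum_c bichar R c x * hat F c.
  by move=> F x; rewrite fourier_inv mulrA mulVf ?mul1r.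
have Kz : forall c, c \notin perp (Sds m S) -> \sum_(s in S) bichar R c (emb m s) = 0.
  move=> c cL.
  rewrite -(big_imset (fun x => bichar R c x)) /=; last by move=> a b _ _; apply: emb_inj.
  under eq_bigr => x _ do rewrite bicharC.
  by rewrite char_sum ?Sds_sub // (negbTE cL).
move=> e; rewrite /logical_channel; congr (_ * _).
transitivity ((#|[set: PDS n m]|%:R)^-1 * \sum_c hat P c * bichar R c e * \sum_(s in S) bichar R c (emb m s)).
  under eq_bigr => s _ do rewrite inv.
  rewrite -mulr_sumr; congr (_ * _).
  rewrite exchange_big /=; apply: eq_bigr => c _.
  rewrite mulr_sumr; apply: eq_bigr => s _.
  by rewrite bicharMr; ring.
transitivity ((#|[set: PDS n m]|%:R)^-1 * \sum_c hat Q c * bichar R c e * \sum_(s in S) bichar R c (emb m s)); last first.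
  under [RHS]eq_bigr => s _ do rewrite inv.
  rewrite -mulr_sumr; congr (_ * _).
  rewrite exchange_big /=; apply: eq_bigr => c _.
  rewrite mulr_sumr; apply: eq_bigr => s _.
  by rewrite bicharMr; ring.
congr (_ * _); apply: eq_bigr => c _.
case: (boolP (c \in perp (Sds m S))) => cL; first by rewrite hatL.
by rewrite Kz // !mulr0.
Qed.
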